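(* Let $v\ne e$ be a boolean permutation. Then no optimal partner $w$ for $v$ satisfies $w\ge v$ in the Bruhat order.
   Context: $\sigma_i=(i,i+1)$; $\ell$ is length; $B(w)$ is the principal Bruhat order ideal of $w$; $e$ is the identity. A permutation is boolean if its reduced words have no repeated letters. For $Q\subseteq\mathfrak{S}_n$ with induced Bruhat order, an almost perfect matching of $Q$ is a chain $\emptyset=Q_0\subset\cdots\subset Q_l=Q$ of coideals (upward-closed subsets of $Q$) with each $Q_i\setminus Q_{i-1}$ a pair $\{x_i,y_i\}$, $x_i<y_i$, $\ell(y_i)=\ell(x_i)+1$, except for exactly one $i$ where it is a singleton $\{z\}$ (the unmatched element). For boolean $v$, $\textsf{ork}(v)$ is the largest $\ell(z)$ over all $w\in\mathfrak{S}_n$ and all almost perfect matchings of $B(v)\cap B(w)$ with unmatched element $z$; an optimal partner of $v$ is a $w$ such that $B(v)\cap B(w)$ has an almost perfect matching whose unmatched element has length $\textsf{ork}(v)$. *)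

(* Defs.v *)
From HB Require Import structures.
From mathcomp Require Import all_boot all_order all_fingroup.
From Stdlib Require Import Relations.
From mathcomp Require Import boolp.
Set Implicit Arguments. Unset Strict Implicit. Unset Printing Implicit Defensive.

Section Defs.
Variable n : nat.
Local Notation P := {perm 'I_n}.

(* Coxeter length = number of inversions. *)
Definition len (w : P) : nat :=
  #|[set p : 'I_n * 'I_n | (p.1 < p.2) && (w p.2 < w p.1)]|.

(* simple transposition sigma_i = (i, i+1), 0-based positions, valid for i.+1 < n *)
Definition sgen (i : nat) : P :=
  match insub i, insub i.+1 with
  | Some a, Some b => tperm (a : 'I_n) (b : 'I_n)
  | _, _ => 1%g
  end.

Definition reduced_word (w : P) (ws : seq nat) : Prop :=
  all (fun i => i.+1 < n) ws /\ (\prod_(i <- ws) sgen i)%g = w /\ size ws = len w.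

Definition boolean_perm (w : P) : Prop :=
  forall ws, reduced_word w ws -> uniq ws.

Definition bruhat_step (u w : P) : Prop :=
  exists a b : 'I_n, a != b /\ w = (u * tperm a b)%g /\ len u < len w.
Definition bruhat : P -> P -> Prop := clos_refl_trans P bruhat_step.

Definition bideal (w : P) : {set P} := [set u | `[< bruhat u w >] ].

Definition coideal (Q A : {set P}) : Prop :=
  A \subset Q /\ forall x y, x \in A -> y \in Q -> bruhat x y -> y \in A.

Definition matched_pair (D : {set P}) : Prop :=
  exists x y : P, D = [set x; y] /\ bruhat x y /\ x != y /\ len y = (len x).+1.

(* Qs = [:: Q_1; ...; Q_l], Q_0 = set0 *)
Definition prevQ (Qs : seq {set P}) (i : nat) : {set P} :=
  if i is j.+1 then nth set0 Qs j else set0.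

Definition almost_perfect_matching (Q : {set P}) (Qs : seq {set P}) (z : P) : Prop :=
  last set0 Qs = Q /\
  (forall i, i < size Qs -> coideal Q (nth set0 Qs i)) /\
  (forall i, i < size Qs -> prevQ Qs i \proper nth set0 Qs i) /\
  exists2 i0, i0 < size Qs &
    nth set0 Qs i0 :\: prevQ Qs i0 = [set z] /\
    forall i, i < size Qs -> i != i0 -> matched_pair (nth set0 Qs i :\: prevQ Qs i).

Definition is_ork (v : P) (k : nat) : Prop :=
  (exists (w : P) Qs z, almost_perfect_matching (bideal v :&: bideal w) Qs z /\ len z = k) /\
  (forall (w : P) Qs z, almost_perfect_matching (bideal v :&: bideal w) Qs z -> len z <= k).

Definition optimal_partner (v w : P) : Prop :=
  exists k, is_ork v k /\
    exists Qs z, almost_perfect_matching (bideal v :&: bideal w) Qs z /\ len z = k.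

End Defs.

(* Main.v *)
Require Import Defs.
From mathcomp Require Import all_boot all_order all_fingroup zify.
From Stdlib Require Import Relations Classical.
From mathcomp Require Import boolp.
Set Implicit Arguments. Unset Strict Implicit. Unset Printing Implicit Defensive.

Section S.
Variable n : nat.
Local Notation P := {perm 'I_n}.

Lemma len_lt (u : P) (i j : 'I_n) : i < j -> u i < u j ->
  len u < len (u * tperm (u i) (u j))%g.
Proof.
move=> ij uij.
set w := (u * _)%g.
pose inij (x : 'I_n) := (x == i) || (x == j).
pose btw (x : 'I_n) := (u i < u x) && (u x < u j).
pose cond (p : 'I_n * 'I_n) := (inij p.1 && ~~ inij p.2 && btw p.2) || (inij p.2 && ~~ inij p.1 && btw p.1).
pose sg := tperm i j.
pose f (p : 'I_n * 'I_n) := if cond p then (sg p.1, sg p.2) else p.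
have inijS x : inij (sg x) = inij x.
  by rewrite /inij /sg; case: tpermP => [->|->|]; rewrite ?eqxx ?orbT //.
have sgN x : ~~ inij x -> sg x = x.
  by rewrite /inij negb_or => /andP[xi xj]; rewrite /sg tpermD // eq_sym.
have condS p : cond p -> cond (sg p.1, sg p.2).
  case: p => p1 p2 /=; rewrite /cond /= !inijS.
  case/orP => /andP[/andP[H1 H2] H3].
    by rewrite H1 H2 (sgN _ H2) H3.
  by rewrite H1 H2 (sgN _ H2) H3 orbT.
have finv : involutive f.
  move=> p; rewrite /f; case cp: (cond p); last by rewrite cp.
  by rewrite condS // !tpermK; case: p cp.
have uinj x y : (u x == u y) = (x == y) by rewrite (inj_eq perm_inj).
have wE x : w x = if x == i then u j else if x == j then u i else u x.
  have ji : (j == i) = false by apply/eqP => e; move: ij; rewrite e ltnn.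
  rewrite /w permM; case: tpermP.
  - by move/perm_inj => ->; rewrite eqxx.
  - by move/perm_inj => ->; rewrite ji eqxx.
  - move=> h1 h2; rewrite ifN; [rewrite ifN //|]; apply/eqP => e; [apply h2|apply h1]; by rewrite e.
rewrite /len.
set A := [set p | _]; set B := [set p | _].
rewrite -(card_imset _ (can_inj finv)).
apply: proper_card; apply/properP; split.
  apply/subsetP => _ /imsetP[[p1 p2] + ->].
  rewrite !inE /= => /andP[lt12 ult].
  have sgi : sg i = j by rewrite /sg tpermL.
  have sgj : sg j = i by rewrite /sg tpermR.
  have sgo x : x != i -> x != j -> sg x = x.
    by move=> a b; apply: sgN; rewrite /inij negb_or a b.
  have ne x y : x != y -> (u x : nat) != (u y : nat).
    by move=> h; apply: contra h => /eqP/val_inj/perm_inj ->.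
  have ji : (j == i) = false by apply/eqP => e; move: ij; rewrite e ltnn.
  have ij' : (i == j) = false by rewrite eq_sym.
  rewrite /f /cond /btw /inij /=.
  have [e1|n1] := eqVneq p1 i; have [e3|n3] := eqVneq p2 i.
  - by move: lt12; rewrite e1 e3 ltnn.
  - subst p1; rewrite ?eqxx /=.
    have [e4|n4] := eqVneq p2 j.
    + subst p2; by move: ult; rewrite ltnNge ltnW.
    + rewrite ?(negbTE n3) ?(negbTE n4) /=.
      have h1 := ne _ _ n3; have h2 := ne _ _ n4.
      case: ifP => /= [c|/negbT c].
      * by lia.
      * rewrite !wE ?eqxx ?(negbTE n3) ?(negbTE n4) /=. lia.
  - subst p2; rewrite ?eqxx ?orbT /=.
    have [e2|n2] := eqVneq p1 j.
    + by subst p1; move: lt12 ij; lia.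
    + rewrite ?(negbTE n1) ?(negbTE n2) /=.
      have h1 := ne _ _ n1; have h2 := ne _ _ n2.
      case: ifP => /= [c|/negbT c].
      * rewrite sgi sgo // !wE ?eqxx ?ji ?(negbTE n1) ?(negbTE n2) /=. lia.
      * rewrite !wE ?eqxx ?(negbTE n1) ?(negbTE n2) /=. lia.
  - rewrite ?(negbTE n1) ?(negbTE n3) /=.
    have h1 := ne _ _ n1; have h3 := ne _ _ n3.
    have [e2|n2] := eqVneq p1 j; have [e4|n4] := eqVneq p2 j.
    + by move: lt12; rewrite e2 e4 ltnn.
    + subst p1; rewrite ?eqxx /= ?(negbTE n4) /=.
      have h4 := ne _ _ n4.
      case: ifP => /= [c|/negbT c].
      * rewrite sgj sgo // !wE ?eqxx ?(negbTE n3) ?(negbTE n4) /=. lia.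
      * rewrite !wE ?eqxx ?ji ?(negbTE n3) ?(negbTE n4) /=. lia.
    + subst p2; rewrite ?eqxx /= ?(negbTE n2) /=.
      have h2 := ne _ _ n2.
      case: ifP => /= [c|/negbT c].
      * by lia.
      * rewrite !wE ?eqxx ?ji ?(negbTE n1) ?(negbTE n2) /=. lia.
    + rewrite ?(negbTE n2) ?(negbTE n4) /= !wE ?(negbTE n1) ?(negbTE n2) ?(negbTE n3) ?(negbTE n4) /=.
      by rewrite lt12.
exists (i, j).
  rewrite inE /= ij /= !wE eqxx ifN; last by apply/eqP => e; move: ij; rewrite e ltnn.
  by rewrite eqxx.
apply/imsetP => -[q qA e].
have : f (i, j) = q by rewrite e finv.
have c0 : cond (i, j) = false by rewrite /cond /inij /= !eqxx !orbT.
rewrite /f c0 => eq.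
by move: qA; rewrite -eq inE /= ij /= ltnNge ltnW.
Qed.
Lemma len_gt (u : P) (i j : 'I_n) : i < j -> u j < u i ->
  len (u * tperm (u i) (u j))%g < len u.
Proof.
move=> ij uji.
set u' := (u * _)%g.
have e1 : u' i = u j by rewrite /u' permM tpermL.
have e2 : u' j = u i by rewrite /u' permM tpermR.
have := len_lt ij (_ : u' i < u' j); rewrite e1 e2 => /(_ uji).
by rewrite /u' tpermC -mulgA tperm2 mulg1.
Qed.

Lemma step_ordered (u x : P) : bruhat_step u x ->
  exists i j : 'I_n, [/\ i < j, u i < u j & x = (u * tperm (u i) (u j))%g].
Proof.
case=> c [d [cd [-> lt]]].
set i0 := (u^-1)%g c; set j0 := (u^-1)%g d.
have ec : c = u i0 by rewrite /i0 permKV.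
have ed : d = u j0 by rewrite /j0 permKV.
rewrite ec ed in cd lt *.
have ne : i0 != j0 by apply: contra cd => /eqP ->.
have une : (u i0 : nat) != u j0 by apply: contra cd => /eqP/val_inj ->.
case: (ltngtP i0 j0) => [ij|ji|/val_inj e]; last by rewrite e eqxx in ne.
- case: (ltngtP (u i0) (u j0)) => [uij|uji|e]; last by rewrite e eqxx in une.
  + by exists i0, j0.
  + by have := len_gt ij uji; rewrite ltnNge ltnW.
- rewrite tpermC.
  case: (ltngtP (u j0) (u i0)) => [uij|uji|e]; last by rewrite e eqxx in une.
  + by exists j0, i0.
  + by have := len_gt ji uji; rewrite tpermC ltnNge ltnW.
Qed.

Section Lift.
Variables (a a' : 'I_n).
Hypothesis aa' : (a' : nat) = a.+1.
Local Notation s := (tperm a a').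

Lemma aneq : a != a'.
Proof. by apply/eqP => e; move: aa'; rewrite e; lia. Qed.

Lemma desc_step (u : P) : (u^-1)%g a' < (u^-1)%g a -> bruhat_step (u * s)%g u.
Proof.
move=> h; exists a, a'; split; first exact: aneq.
split; first by rewrite -mulgA tperm2 mulg1.
set i := (u^-1)%g a'; set j := (u^-1)%g a.
have e1 : (u * s)%g i = a by rewrite permM /i permKV tpermR.
have e2 : (u * s)%g j = a' by rewrite permM /j permKV tpermL.
have := len_lt h (_ : (u * s)%g i < (u * s)%g j); rewrite e1 e2 aa' => /(_ (ltnSn _)).
by rewrite -mulgA tperm2 mulg1.
Qed.

Lemma lift (v : P) : (v^-1)%g a' < (v^-1)%g a ->
  forall u, bruhat u v -> bruhat (u * s)%g v.
Proof.
move=> hv u0 /clos_rt_rt1n_iff h.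
elim: h hv => [p hp|p x y st rt IH hy].
  by apply: rt_step; apply: desc_step.
have huv' : bruhat x y by apply/clos_rt_rt1n_iff.
have ne : (p^-1)%g a != (p^-1)%g a' by apply: contra aneq => /eqP/perm_inj ->.
case: (ltngtP ((p^-1)%g a) ((p^-1)%g a')) => [lt|gt|/val_inj e]; last by rewrite e eqxx in ne.
2: by apply: (@rt_trans _ _ _ p); [apply: rt_step; exact: desc_step | apply: (@rt_trans _ _ _ x); [exact: rt_step|]].
case: (step_ordered st) => i [j [ij uij ex]].
have [/andP[/eqP ei /eqP ej]|nt] := boolP ((p i == a) && (p j == a')).
  by rewrite ei ej in ex; rewrite -ex.
apply: (@rt_trans _ _ _ (x * s)%g _ _ (IH hy)); apply: rt_step.
exists (s (p i)), (s (p j)); split.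
  by rewrite !(inj_eq perm_inj) neq_ltn ij.
have exs : (x * s = p * s * tperm (s (p i)) (s (p j)))%g.
  by rewrite ex -(tpermJ (p i) (p j) s) /conjg !mulgA mulgK.
split; first exact: exs.
rewrite exs.
have e1 : (p * s)%g i = s (p i) by rewrite permM.
have e2 : (p * s)%g j = s (p j) by rewrite permM.
have slt : s (p i) < s (p j).
  move: nt uij; rewrite negb_and.
  case: tpermP => [->|->|h1 h2]; case: tpermP => [->|->|h3 h4]; rewrite ?eqxx //=; try lia.
  - move=> _ h; have : (p j : nat) <> a' by move/val_inj.
    lia.
  - move=> _ h; have : (p i : nat) <> a by move/val_inj.
    lia.
by have := len_lt (u := (p * s)%g) ij; rewrite e1 e2 => /(_ slt).
Qed.
End Lift.

Lemma descent_exists (v : P) : v != 1%g ->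
  exists a a' : 'I_n, (a' : nat) = a.+1 /\ (v^-1)%g a' < (v^-1)%g a.
Proof.
move=> v1; case: (Classical_Prop.classic (exists a a' : 'I_n, (a' : nat) = a.+1 /\ (v^-1)%g a' < (v^-1)%g a)) => // nd'.
have nd : forall a : 'I_n, ~ exists a' : 'I_n, (a' : nat) = a.+1 /\ (v^-1)%g a' < (v^-1)%g a.
  by move=> a [a' h]; apply: nd'; exists a, a'.
have inc (a a' : 'I_n) : (a' : nat) = a.+1 -> (v^-1)%g a < (v^-1)%g a'.
  move=> e; case: (ltngtP ((v^-1)%g a) ((v^-1)%g a')) => // h.
    by exfalso; apply: (nd a); exists a'.
  by move/val_inj/perm_inj: h => h; move: e; rewrite h; lia.
pose g := (v^-1)%g.
have lo : forall k (hk : k < n), k <= g (Ordinal hk).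
  elim=> [//|k IH] hk.
  have hk' : k < n by lia.
  have := inc (Ordinal hk') (Ordinal hk) erefl; have := IH hk'; rewrite /g; lia.
have hi : forall m k (hk : k < n), k + m = n.-1 -> g (Ordinal hk) <= k.
  elim=> [|m IH] k hk e.
    have := ltn_ord (g (Ordinal hk)); lia.
  have hk' : k.+1 < n by lia.
  have := IH _ hk' (_ : k.+1 + m = n.-1); rewrite -/g.
  have := inc (Ordinal hk) (Ordinal hk') erefl; rewrite -/g.
  move=> h1 h2; have := h2 (ltac:(lia)); lia.
have gid : g = 1%g.
  apply/permP => x; rewrite perm1; apply/val_inj => /=.
  case: x => k hk.
  have := lo k hk; have := hi (n.-1 - k) k hk ltac:(lia).
  change (nat_of_ord (Ordinal hk)) with k; lia.
move: v1; rewrite -(invgK v) -/g gid invg1 eqxx //.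
Qed.

Lemma even_inv (T : finType) (f : T -> T) : involutive f -> (forall x, f x != x) ->
  forall A : {set T}, (forall x, x \in A -> f x \in A) -> ~~ odd #|A|.
Proof.
move=> fi fx.
suff key : forall m (A : {set T}), #|A| <= m -> (forall x, x \in A -> f x \in A) -> ~~ odd #|A|.
  by move=> A; apply: key.
elim=> [|m IH] A hA cl.
  by move: hA; rewrite leqn0 => /eqP ->.
have [->|/set0Pn [x xA]] := eqVneq A set0; first by rewrite cards0.
set A' := A :\: [set x; f x].
have sub : [set x; f x] \subset A by apply/subsetP => y; rewrite !inE => /orP[]/eqP ->; rewrite ?cl.
have cA : #|A| = #|A'| + 2.
  rewrite /A' cardsD (setIidPr sub) cards2 eq_sym fx.
  have : #|[set x; f x]| <= #|A| by apply: subset_leq_card.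
  rewrite cards2 eq_sym fx; lia.
have cl' : forall y, y \in A' -> f y \in A'.
  move=> y; rewrite !inE negb_or => /andP[/andP[yx yfx] yA].
  rewrite cl // andbT negb_or; apply/andP; split.
    by apply: contra yfx => /eqP <-; rewrite fi.
  by apply: contra yx => /eqP/(can_inj fi) ->.
rewrite cA oddD /= addbF.
by apply: IH cl'; lia.
Qed.

Lemma apm_odd (Q : {set P}) Qs z : almost_perfect_matching Q Qs z -> odd #|Q|.
Proof.
case=> [hl [_ [hp [i0 hi0 [hz hm]]]]].
have key : forall i, i < size Qs -> odd #|nth set0 Qs i| = (i0 <= i).
  move=> i; elim: i => [|i IH] hi.
    have := hp 0 hi; rewrite /= => /properP[sub _].
    have -> : nth set0 Qs 0 = nth set0 Qs 0 :\: set0 by rewrite setD0.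
    have [e|ne] := eqVneq i0 0.
      by move: hz; rewrite e /= => ->; rewrite cards1.
    have := hm 0 hi; rewrite eq_sym ne => /(_ isT) [x [y [-> [_ [xy _]]]]].
    by rewrite cards2 xy /= leqn0 (negbTE ne).
  have := hp i.+1 hi; rewrite /= => /properP[sub _].
  have := IH (ltnW hi) => IHi.
  have cE : #|nth set0 Qs i.+1| = #|nth set0 Qs i| + #|nth set0 Qs i.+1 :\: nth set0 Qs i|.
    rewrite cardsD (setIidPr sub).
    have := subset_leq_card sub; lia.
  rewrite cE oddD IHi.
  have [e|ne] := eqVneq i0 i.+1.
    by move: hz; rewrite e /= => ->; rewrite cards1 ltnn leqnn.
  have := hm i.+1 hi; rewrite eq_sym ne => /(_ isT) [x [y [-> [_ [xy _]]]]].
  rewrite cards2 xy /= addbF.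
  by rewrite (leq_eqVlt i0 i.+1) (negbTE ne) ltnS.
have sz : 0 < size Qs by lia.
rewrite -hl -nth_last key; last by lia.
lia.
Qed.

End S.

Theorem lemma5p1 (n : nat) (v : {perm 'I_n}) :
  boolean_perm v -> v != 1%g ->
  forall w : {perm 'I_n}, optimal_partner v w -> ~ bruhat v w.
Proof.
move=> _ v1 w [k [_ [Qs [z [apm _]]]]] bvw.
have E : bideal v :&: bideal w = bideal v.
  apply/setIidPl/subsetP => u; rewrite !inE => /asboolP h; apply/asboolP.
  exact: rt_trans h bvw.
rewrite E in apm.
have := apm_odd apm.
have [a [a' [aa' hd]]] := descent_exists v1.
have := @even_inv _ (fun u => u * tperm a a')%g _ _ (bideal v).
move=> /(_ _ _ _) h; rewrite (negbTE (h _ _ _)) //.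
- by move=> u /=; rewrite -mulgA tperm2 mulg1.
- move=> u /=; apply/eqP => /(congr1 (fun t => (u^-1 * t)%g)).
  rewrite mulgA mulVg mul1g => /permP /(_ a); rewrite tpermL perm1 => e.
  by move: aa'; rewrite e; lia.
- move=> u; rewrite !inE => /asboolP hu; apply/asboolP.
  exact: (lift aa' hd).
Qed.
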